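(* Let $D=(V,E;s,t)$ be a directed network with unit arc capacities (parallel arcs allowed), let $N\subseteq E$ be the set of private arcs (players), $M=E\setminus N$ the public arcs, and assume (A1) every $s$-$t$ path of $D$ contains an arc of $N$ and (A2) every arc of $D$ lies on some $s$-$t$ path. Let $\Gamma_D=(N,\gamma)$ be the associated flow game with public arcs, and let $\epsilon^*=\max\{\epsilon:\mathcal{C}_{\epsilon}(\Gamma_D)\neq\emptyset\}$. Then $\epsilon^*=\frac{\sigma_E}{\sigma_N}-1$. Moreover: (i) $\frac{\sigma_N}{\sigma_E}\,\mathcal{C}_{\epsilon^*}(\Gamma_D)=\{x\in\mathbb{R}^N_{\ge 0}: x(N)=\sigma_N,\ x(N\cap P)\ge 1 \text{ for all } P\in\mathscr{P}\}$; (ii) $\frac{\sigma_N}{\sigma_E}\,\mathcal{C}_{\epsilon^*}(\Gamma_D)$ is the convex hull of the incidence vectors (in $\mathbb{R}^N$) of the minimum $s$-$t$ cuts constrained to $N$.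
   Context: A path is a set of arcs joining a sequence of distinct vertices, all arcs directed along the sequence; $\mathscr{P}$ is the set of all $s$-$t$ paths of $D$. Each arc of $N$ is owned by a distinct player and the player set is identified with $N$; public arcs may be used by every coalition for free. For $S\subseteq N$, $\gamma(S)$ is the maximum number of pairwise arc-disjoint $s$-$t$ paths in the network $D_S=(V,S\cup M;s,t)$ (its maximum flow value). For $F\subseteq E$, two paths are disjoint on $F$ if they share no arc of $F$, and $\sigma_F$ denotes the maximum number of $s$-$t$ paths that are pairwise disjoint on $F$ (so $\sigma_E=\gamma(N)$). An $s$-$t$ cut constrained to $F$ is a set of arcs contained in $F$ that meets every $s$-$t$ path; a minimum one is one of minimum cardinality. For $x\in\mathbb{R}^N$ and $S\subseteq N$, $x(S)=\sum_{i\in S}x_i$. An allocation of $\Gamma_D$ is $x\in\mathbb{R}^N_{\ge0}$ with $x(N)=\gamma(N)$. For $\epsilon\in\mathbb{R}$, the $\epsilon$-approximate core is $\mathcal{C}_\epsilon(\Gamma_D)=\{x \text{ allocation}: x(S)\ge(1+\epsilon)\gamma(S)\ \forall S\subseteq N\}$. *)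

(* Defs.v *)
From HB Require Import structures.
From mathcomp Require Import all_boot all_order all_algebra.
From mathcomp Require Import boolp reals.
Set Implicit Arguments. Unset Strict Implicit. Unset Printing Implicit Defensive.
Import Order.TTheory GRing.Theory Num.Theory.
Local Open Scope ring_scope.

(* Directed network D = (V, E; s, t): arcs e : E go from src e to dst e;
   parallel arcs are allowed since E is an arbitrary finite type. *)

(* p = [e1; ...; ek] is an s-t path sequence: vertex sequence
   s = v0, v1 = dst e1, ..., vk = dst ek = t is duplicate-free and
   src e_i = v_{i-1}. *)
Definition is_path_seq (V E : finType) (src dst : E -> V) (s t : V)
  (p : seq E) : bool :=
  [&& uniq (s :: map dst p),
      last s (map dst p) == t &
      map src p == belast s (map dst p)].

Definition is_path (V E : finType) (src dst : E -> V) (s t : V)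
  (P : {set E}) : Prop :=
  exists p : seq E, is_path_seq src dst s t p /\ P = [set e in p].

Definition disj_on_family (V E : finType) (src dst : E -> V) (s t : V)
  (F : {set E}) (k : nat) : Prop :=
  exists f : 'I_k -> {set E},
    (forall i, is_path src dst s t (f i)) /\
    (forall i j, i != j -> f i :&: f j :&: F = set0).

(* sigma_F : the maximum number of s-t paths pairwise disjoint on F.
   (The range bound #|E| is never reached when every path meets F in an
   arc, which holds for F = N, F = E under (A1).) *)
Definition sigma (V E : finType) (src dst : E -> V) (s t : V)
  (F : {set E}) : nat :=
  (\max_(k < #|E|.+1 | `[< disj_on_family src dst s t F k >]) k)%N.

(* k pairwise arc-disjoint s-t paths in D_S = (V, S cup M; s, t),
   M = E \ N. *)
Definition disj_family_in (V E : finType) (src dst : E -> V) (s t : V)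
  (N S : {set E}) (k : nat) : Prop :=
  exists f : 'I_k -> {set E},
    (forall i, is_path src dst s t (f i) /\ f i \subset S :|: ~: N) /\
    (forall i j, i != j -> f i :&: f j = set0).

(* gamma(S) : maximum flow value of D_S (unit capacities). *)
Definition gamma (V E : finType) (src dst : E -> V) (s t : V)
  (N S : {set E}) : nat :=
  (\max_(k < #|E|.+1 | `[< disj_family_in src dst s t N S k >]) k)%N.

Notation player N := {e | e \in N}.

Definition xsum (E : finType) (R : realType) (N : {set E})
  (x : player N -> R) (S : {set E}) : R :=
  \sum_(i : player N | val i \in S) x i.

Definition in_approx_core (R : realType) (V E : finType) (src dst : E -> V)
  (s t : V) (N : {set E}) (eps : R) (x : player N -> R) : Prop :=
  (forall i, 0 <= x i) /\
  xsum x N = (gamma src dst s t N N)%:R /\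
  (forall S : {set E}, S \subset N ->
     (1 + eps) * (gamma src dst s t N S)%:R <= xsum x S).

Definition is_cut_in (V E : finType) (src dst : E -> V) (s t : V)
  (N C : {set E}) : Prop :=
  C \subset N /\ (forall P, is_path src dst s t P -> P :&: C != set0).

Definition is_min_cut_in (V E : finType) (src dst : E -> V) (s t : V)
  (N C : {set E}) : Prop :=
  is_cut_in src dst s t N C /\
  (forall C', is_cut_in src dst s t N C' -> (#|C| <= #|C'|)%N).

Definition in_hull_min_cuts (R : realType) (V E : finType) (src dst : E -> V)
  (s t : V) (N : {set E}) (y : player N -> R) : Prop :=
  exists lam : {set E} -> R,
    (forall C, 0 <= lam C) /\
    (forall C, ~ is_min_cut_in src dst s t N C -> lam C = 0) /\
    \sum_(C : {set E}) lam C = 1 /\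
    (forall i : player N, y i = \sum_(C : {set E}) lam C * (val i \in C)%:R).

(* Main.v *)
Require Import Defs.
From HB Require Import structures.
From mathcomp Require Import all_boot all_order all_algebra.
From mathcomp Require Import boolp reals.
Set Implicit Arguments. Unset Strict Implicit. Unset Printing Implicit Defensive.
Import Order.TTheory GRing.Theory Num.Theory.
From mathcomp Require Import ring lra zify.
Section Walk.
Variables (V E : finType) (src dst : E -> V).

Definition tl (a : E * bool) := if a.2 then src a.1 else dst a.1.
Definition hd (a : E * bool) := if a.2 then dst a.1 else src a.1.
Fixpoint walk (x : V) (l : seq (E * bool)) : bool :=
  if l is a :: l' then (tl a == x) && walk (hd a) l' else true.
Definition wend x l := last x (map hd l).

Lemma walk_cat x l1 l2 : walk x (l1 ++ l2) = walk x l1 && walk (wend x l1) l2.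
Proof.
elim: l1 x => [|a l1 IH] x //=.
by rewrite IH andbA.
Qed.

Lemma wend_cat x l1 l2 : wend x (l1 ++ l2) = wend (wend x l1) l2.
Proof. by rewrite /wend map_cat last_cat. Qed.

Lemma walk_mem x l b : walk x l -> b \in l ->
  (tl b \in x :: map hd l) && (hd b \in map hd l).
Proof.
elim: l x => [|a l IH] x //= /andP[/eqP ta wl].
rewrite inE => /orP[/eqP->|bl].
  by rewrite ta !inE /= !eqxx.
have /andP[h1 h2] := IH _ wl bl.
by rewrite !inE in h1 *; rewrite h2 orbT andbT; case/orP: h1 => ->; rewrite ?orbT.
Qed.

Lemma walk_suffix z l x : walk z l -> uniq (z :: map hd l) -> x \in z :: map hd l ->
  exists l2, [/\ walk x l2, wend x l2 = wend z l, uniq (x :: map hd l2) & subseq l2 l].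
Proof.
elim: l z => [|a l IH] z /=.
  by rewrite inE => _ _ /eqP->; exists [::]; split.
move=> /andP[/eqP ta wl] /andP[zn un].
rewrite inE => /orP[/eqP xz|xin].
  subst x; exists (a :: l); split => //; rewrite /= ?ta ?eqxx ?wl ?zn ?un //.
have [l2 [w2 e2 u2 s2]] := IH _ wl un xin.
exists l2; split => //; exact: subseq_trans s2 (subseq_cons _ _).
Qed.

Lemma shorten_walk x l : walk x l ->
  exists l', [/\ walk x l', wend x l' = wend x l, uniq (x :: map hd l') & subseq l' l].
Proof.
elim: l x => [|a l IH] x /=.
  by move=> _; exists [::].
move=> /andP[/eqP ta wl].
have [l'' [w2 e2 u2 s2]] := IH _ wl.
case: (boolP (x \in hd a :: map hd l'')) => xin.
  have [l3 [w3 e3 u3 s3]] := walk_suffix w2 u2 xin.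
  exists l3; split => //.
    by rewrite e3 e2.
  exact: subseq_trans s3 (subseq_trans s2 (subseq_cons _ _)).
exists (a :: l''); split.
- by rewrite /= ta eqxx w2.
- by rewrite /wend /= -/(wend _ _) e2.
- by apply/andP; split.
- by rewrite /= eqxx.
Qed.

Lemma uniq_fst x l : walk x l -> uniq (x :: map hd l) -> uniq (map fst l).
Proof.
elim: l x => [|a l IH] x //= /andP[/eqP ta wl] /andP[xn un].
rewrite (IH _ wl un) andbT.
apply/mapP => -[b bl eb].
have /andP[h1 h2] := walk_mem wl bl.
move: xn; rewrite -ta.
move: h1 h2; rewrite /tl /hd eb.
by case: a.2 b.2 => [] [] h1 h2; rewrite ?h1 ?h2 // => /negP; rewrite !inE ?h2 ?orbT //=;
  move: h1; rewrite inE => /orP[/eqP->|->]; rewrite ?eqxx ?orbT.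
Qed.

Definition fwd (p : seq E) := map (fun e => (e, true)) p.

Lemma map_hd_fwd p : map hd (fwd p) = map dst p.
Proof. by rewrite /fwd -map_comp. Qed.

Lemma walk_fwd x p : walk x (fwd p) = (map src p == belast x (map dst p)).
Proof.
elim: p x => [|e p IH] x //=.
by rewrite IH /tl /= eqseq_cons.
Qed.

Lemma fwd_fst l : all snd l -> fwd (map fst l) = l.
Proof. by elim: l => [|[e b] l IH] //= /andP[/= -> /IH ->]. Qed.

Lemma walk_cross (X : pred V) x l : walk x l -> x \in X -> wend x l \notin X ->
  exists2 a, a \in l & (tl a \in X) && (hd a \notin X).
Proof.
elim: l x => [|a l IH] x /=; first by move=> _ ->.
move=> /andP[/eqP ta wl] xX wX.
case: (boolP (hd a \in X)) => hX.
  by have [b bl hb] := IH _ wl hX wX; exists b => //; rewrite inE bl orbT.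
by exists a; rewrite ?inE ?eqxx // ta xX.
Qed.

Lemma is_path_seq_walk s t p : is_path_seq src dst s t p =
  [&& uniq (s :: map hd (fwd p)), wend s (fwd p) == t & walk s (fwd p)].
Proof. by rewrite /is_path_seq walk_fwd /wend map_hd_fwd. Qed.

End Walk.
Section Flow.
Local Open Scope ring_scope.
Variables (V E : finType) (src dst : E -> V) (s t : V) (N : {set E}).

Local Notation tl := (tl src dst).
Local Notation hd := (hd src dst).
Local Notation walk := (walk src dst).
Local Notation wend := (wend src dst).

Definition ex (f : E -> int) v : int :=
  \sum_(e | dst e == v) f e - \sum_(e | src e == v) f e.

Lemma sum_part (f : E -> int) (p : E -> V) (X : {set V}) :
  \sum_(v in X) \sum_(e | p e == v) f e = \sum_(e | p e \in X) f e.
Proof.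
rewrite [RHS](partition_big p (mem X)) //=.
apply: eq_bigr => v vX; apply: eq_bigl => e.
by case: eqP => [->|_]; rewrite ?vX ?andbF.
Qed.

Lemma ex_cut f (X : {set V}) : \sum_(v in X) ex f v =
  \sum_(e | (dst e \in X) && (src e \notin X)) f e -
  \sum_(e | (src e \in X) && (dst e \notin X)) f e.
Proof.
rewrite /ex sumrB !sum_part.
rewrite (bigID (fun e => src e \in X) (fun e => dst e \in X)) /=.
rewrite [X in _ - X](bigID (fun e => dst e \in X) (fun e => src e \in X)) /=.
have -> : \sum_(i | (src i \in X) && (dst i \in X)) f i =
          \sum_(i | (dst i \in X) && (src i \in X)) f i.
  by apply: eq_bigl => e; rewrite andbC.
by rewrite opprD addrACA subrr add0r.
Qed.

Lemma ex_sum0 f : \sum_v ex f v = 0.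
Proof.
have := ex_cut f setT.
have -> : \sum_(v in [set: V]) ex f v = \sum_v ex f v.
  by apply: eq_bigl => v; rewrite in_setT.
move=> ->.
by rewrite !big1 ?subr0 // => e /andP[_]; rewrite in_setT.
Qed.

Lemma ex_add f g v : ex (fun e => f e + g e) v = ex f v + ex g v.
Proof. rewrite /ex !big_split /=; ring. Qed.

Lemma ex_opp f v : ex (fun e => - f e) v = - ex f v.
Proof. rewrite /ex !sumrN; ring. Qed.

Lemma ex_ext f g v : f =1 g -> ex f v = ex g v.
Proof. by move=> fg; rewrite /ex; congr (_ - _); apply: eq_bigr => e _. Qed.

Definition sgn (a : E * bool) : int := if a.2 then 1 else -1.

Definition delta (l : seq (E * bool)) e : int :=
  \sum_(a <- l) (a.1 == e)%:Z * sgn a.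

Lemma sum_pick (P : pred E) e0 (c : int) :
  \sum_(e | P e) (e0 == e)%:Z * c = (P e0)%:Z * c.
Proof.
rewrite big_mkcond (bigD1 e0) //= big1 ?addr0.
  by rewrite eqxx; case: (P e0); rewrite ?mul0r.
by move=> e ne; rewrite eq_sym (negbTE ne); case: (P e); rewrite ?mul0r.
Qed.

Lemma ex_delta x l v : walk x l -> ex (delta l) v = (wend x l == v)%:Z - (x == v)%:Z.
Proof.
elim: l x => [|a l IH] x /=.
  move=> _; rewrite /wend /= subrr /ex /delta.
  by rewrite !big1 ?subrr // => e _; rewrite big_nil.
move=> /andP[/eqP ta wl].
rewrite (ex_ext _ (g := fun e => (a.1 == e)%:Z * sgn a + delta l e)); last first.
  by move=> e; rewrite /delta big_cons.
rewrite ex_add (IH _ wl) /ex !sum_pick -ta /wend /=.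
by case: a {ta wl} => e [] /=; rewrite /sgn /=; ring.
Qed.

Definition valid (f : E -> int) :=
  [/\ forall e, 0 <= f e, forall e, e \in N -> f e <= 1 &
      forall v, v != s -> v != t -> ex f v = 0].

Lemma ex_s f : valid f -> s != t -> ex f s = - ex f t.
Proof.
move=> [_ _ cons] st.
have := ex_sum0 f.
rewrite (bigD1 s) //= (bigD1 t) /=; last by rewrite eq_sym.
rewrite big1 ?addr0; last first.
  by move=> v /andP[vt vs]; apply: cons.
by move/eqP; rewrite addr_eq0 => /eqP.
Qed.

Definition reach (ok : pred (E * bool)) v :=
  exists l, [/\ walk s l, all ok l & wend s l = v].

Lemma reach_s ok : reach ok s.
Proof. by exists [::]. Qed.

Lemma reach_ext ok a : reach ok (tl a) -> ok a -> reach ok (hd a).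
Proof.
move=> [l [wl al el]] oa.
exists (l ++ [:: a]); split.
- by rewrite walk_cat wl el /= eqxx.
- by rewrite all_cat al /= oa.
- by rewrite wend_cat el.
Qed.

Lemma reach_short ok v : reach ok v ->
  exists l, [/\ walk s l, all ok l, wend s l = v & uniq (s :: map hd l)].
Proof.
move=> [l [wl al el]].
have [l' [w' e' u' s']] := shorten_walk wl.
exists l'; split => //; last by rewrite e'.
by apply/allP => a /(mem_subseq s') al'; move/allP: al; apply.
Qed.

Lemma reach_path ok : reach ok t -> (forall a, ok a -> a.2) ->
  exists p, is_path_seq src dst s t p /\ (forall e, e \in p -> ok (e, true)).
Proof.
move=> /reach_short [l [wl al el ul]] okf.
have sl : all snd l by apply/allP => a /(allP al) /okf.
exists (map fst l); split.
  by rewrite is_path_seq_walk fwd_fst // ul wl el eqxx.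
move=> e /mapP [a al' ->].
have := allP sl a al'; have := allP al a al'.
by case: a {al'} => e' [].
Qed.

Lemma delta_fwd p e : uniq p -> delta (fwd p) e = (e \in p)%:Z.
Proof.
move=> up; rewrite /delta /fwd big_map /sgn /= -count_uniq_mem //.
elim: p {up} => [|x p IH]; first by rewrite big_nil.
by rewrite big_cons IH /= mulr1 eq_sym; case: (x == e); rewrite //= add0n.
Qed.

Hypothesis st : s != t.

Lemma Xin ok v : (v \in [set v | `[< reach ok v >]]) = `[< reach ok v >].
Proof. by rewrite inE. Qed.

Lemma supp_path f : valid f -> 0 < ex f t ->
  exists p, is_path_seq src dst s t p /\ (forall e, e \in p -> 0 < f e).
Proof.
move=> vf pos.
pose ok := fun a : E * bool => a.2 && (0 < f a.1).
case: (asboolP (reach ok t)) => rt.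
  have [p [pp pf]] := reach_path rt (fun a => (fun H => proj1 (andP H)) : ok a -> a.2).
  by exists p; split => // e /pf /andP[].
pose X := [set v | `[< reach ok v >]].
have sX : s \in X by rewrite Xin; apply/asboolP; apply: reach_s.
have tX : t \notin X by rewrite Xin; apply/asboolP.
have H := ex_cut f X.
have L : \sum_(v in X) ex f v = ex f s.
  rewrite (bigD1 s) //= big1 ?addr0 // => v /andP[vX vs].
  case: vf => _ _ cons; apply: cons => //.
  by apply: contraNneq tX => <-.
have out0 : \sum_(e | (src e \in X) && (dst e \notin X)) f e <= 0.
  apply: sumr_le0 => e /andP[sX' dX']; rewrite leNgt; apply/negP => fe.
  apply: (negP dX'); rewrite Xin; apply/asboolP.
  apply: (reach_ext (a := (e, true))); last by rewrite /ok /= fe.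
  by move: sX'; rewrite Xin => /asboolP.
have in0 : 0 <= \sum_(e | (dst e \in X) && (src e \notin X)) f e.
  by apply: sumr_ge0 => e _; case: vf.
move: H; rewrite L (ex_s vf st) => H.
exfalso; lra.
Qed.

Lemma path_uniq p : is_path_seq src dst s t p -> uniq p.
Proof.
by case/and3P => /= /andP[_ u] _ _; move: u; apply: map_uniq.
Qed.

Lemma decomp n : forall f, valid f -> ex f t = n%:Z -> exists g : nat -> {set E},
  (forall i, (i < n)%N -> is_path src dst s t (g i) /\ (forall e, e \in g i -> 0 < f e)) /\
  (forall i j, (i < n)%N -> (j < n)%N -> i != j -> g i :&: g j :&: N = set0).
Proof.
elim: n => [|n IH] f vf vt.
  by exists (fun _ => set0); split.
have [p [pp pf]] := supp_path vf (ltac:(rewrite vt; lia)).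
have up := path_uniq pp.
have := pp; rewrite is_path_seq_walk => /and3P[_ /eqP wt wp].
pose f' := fun e => f e - (e \in p)%:Z.
have ex' : forall v, ex f' v = ex f v - ((t == v)%:Z - (s == v)%:Z).
  move=> v; rewrite /f' (ex_ext (g := fun e => f e + - delta (fwd p) e)); last first.
    by move=> e; rewrite delta_fwd.
  by rewrite ex_add ex_opp (ex_delta _ wp) wt.
case: vf => f0 f1 fc.
have f'le : forall e, f' e <= f e.
  by move=> e; rewrite /f'; case: (e \in p) => /=; lia.
have vf' : valid f'.
  split.
  - move=> e; rewrite /f'; case: (boolP (e \in p)) => ep /=.
      by have := pf e ep; lia.
    by have := f0 e; lia.
  - by move=> e eN; apply: le_trans (f'le e) (f1 e eN).
  - move=> v vs vt'; rewrite ex' fc //.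
    by rewrite eq_sym (negbTE vt') eq_sym (negbTE vs) /=; lia.
have vt' : ex f' t = n%:Z.
  by rewrite ex' vt eqxx (negbTE st) /=; lia.
have [g' [gp gd]] := IH f' vf' vt'.
have key : forall j e, (j < n)%N -> e \in g' j -> e \in p -> e \in N -> False.
  move=> j e jn ej ep eN.
  have := (gp j jn).2 e ej; rewrite /f' ep /=.
  by have := f1 e eN; lia.
exists (fun i => if i == n then [set e in p] else g' i); split.
  move=> i; rewrite ltnS leq_eqVlt => /orP[/eqP->|iN].
    rewrite eqxx; split; first by exists p.
    by move=> e; rewrite inE => /pf.
  rewrite (ltn_eqF iN); have [g1 g2] := gp i iN; split => //.
  by move=> e /g2 h; exact: lt_le_trans h (f'le e).
move=> i j; rewrite ltnS leq_eqVlt => /orP[/eqP ein|iN];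
  rewrite ltnS leq_eqVlt => /orP[/eqP ejn|jN] nij.
- by move: nij; rewrite ein ejn eqxx.
- subst i; rewrite eqxx (ltn_eqF jN); apply/setP => e; rewrite !inE.
  by apply/negP => /andP[/andP[ep ej] eN]; apply: (key j e).
- subst j; rewrite eqxx (ltn_eqF iN); apply/setP => e; rewrite !inE.
  by apply/negP => /andP[/andP[ei ep] eN]; apply: (key i e).
- by rewrite (ltn_eqF iN) (ltn_eqF jN); apply: gd.
Qed.

Lemma delta_cases l e : uniq (map fst l) ->
  [\/ delta l e = 0, (e, true) \in l /\ delta l e = 1 | (e, false) \in l /\ delta l e = -1].
Proof.
elim: l => [|a l IH] /=; first by constructor 1; rewrite /delta big_nil.
move=> /andP[an un]; rewrite /delta big_cons -/(delta l e).
case: (eqVneq a.1 e) => ae.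
  have dl0 : delta l e = 0.
    rewrite /delta big_seq big1 // => b bl.
    suff -> : (b.1 == e) = false by rewrite mul0r.
    apply: contraNF an => /eqP be; rewrite ae -be; exact: map_f.
  rewrite dl0 addr0.
  case: a ae {an} => e' [] /= -> ; rewrite /sgn /=.
    by constructor 2; rewrite mem_head.
  by constructor 3; rewrite mem_head.
rewrite mul0r add0r.
have ne : forall d, (a == (e, d)) = false.
  by move=> d; apply: contraNF ae => /eqP ->.
case: (IH un) => [h|[m h]|[m h]]; [constructor 1 | constructor 2 | constructor 3] => //;
  by rewrite inE m orbT.
Qed.

End Flow.
Section Menger.
Local Open Scope ring_scope.
Variables (V E : finType) (src dst : E -> V) (s t : V) (N : {set E}).
Hypothesis st : s != t.
Hypothesis A1 : forall P, is_path src dst s t P -> P :&: N != set0.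

Lemma fam_card (C : {set E}) k (g : nat -> {set E}) :
  (forall i, (i < k)%N -> g i :&: C != set0) -> C \subset N ->
  (forall i j, (i < k)%N -> (j < k)%N -> i != j -> g i :&: g j :&: N = set0) ->
  (k <= #|C|)%N.
Proof.
move=> gC CN gd.
case: k gC gd => [|k] gC gd //.
have /set0Pn [e0 _] := gC 0%N isT.
pose h := fun i : 'I_k.+1 => odflt e0 [pick e in g i :&: C].
have hP : forall i : 'I_k.+1, h i \in g i :&: C.
  move=> i; rewrite /h; case: pickP => [e //|none].
  have /set0Pn [e ee] := gC i (ltn_ord i).
  by move: (none e); rewrite ee.
have hinj : injective h.
  move=> i j hij; apply/eqP; apply/negPn/negP => nij.
  have := gd i j (ltn_ord i) (ltn_ord j) nij.
  move/setP/(_ (h i)); rewrite !inE.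
  have := hP i; have := hP j; rewrite -hij !inE => /andP[hj hC] /andP[hi _].
  by rewrite hi hj (subsetP CN _ hC).
have <- : #|[set h i | i in 'I_k.+1]| = k.+1 by rewrite card_imset // card_ord.
apply: subset_leq_card; apply/subsetP => e /imsetP [i _ ->].
by have := hP i; rewrite inE => /andP[].
Qed.

Lemma disj_on_nat F k : disj_on_family src dst s t F k ->
  exists g : nat -> {set E},
    (forall i, (i < k)%N -> is_path src dst s t (g i)) /\
    (forall i j, (i < k)%N -> (j < k)%N -> i != j -> g i :&: g j :&: F = set0).
Proof.
move=> [f [fp fd]].
exists (fun i => if @insub _ (fun i => i < k)%N 'I_k i is Some j then f j else set0).
split.
  by move=> i ik; rewrite insubT; apply: fp.
move=> i j ik jk ij; rewrite !insubT; apply: fd.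
by apply: contra ij => /eqP/(congr1 val) /= ->.
Qed.

Lemma nat_disj_on F k (g : nat -> {set E}) :
  (forall i, (i < k)%N -> is_path src dst s t (g i)) ->
  (forall i j, (i < k)%N -> (j < k)%N -> i != j -> g i :&: g j :&: F = set0) ->
  disj_on_family src dst s t F k.
Proof.
move=> gp gd; exists (fun i : 'I_k => g i); split.
  by move=> i; apply: gp.
by move=> i j ij; apply: gd.
Qed.

Lemma disj_in_nat S k : disj_family_in src dst s t N S k ->
  exists g : nat -> {set E},
    (forall i, (i < k)%N -> is_path src dst s t (g i) /\ g i \subset S :|: ~: N) /\
    (forall i j, (i < k)%N -> (j < k)%N -> i != j -> g i :&: g j = set0).
Proof.
move=> [f [fp fd]].
exists (fun i => if @insub _ (fun i => i < k)%N 'I_k i is Some j then f j else set0).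
split.
  by move=> i ik; rewrite insubT; apply: fp.
move=> i j ik jk ij; rewrite !insubT; apply: fd.
by apply: contra ij => /eqP/(congr1 val) /= ->.
Qed.

Lemma max_attain n (P : nat -> Prop) : P 0%N -> P (\max_(k < n.+1 | `[< P k >]) k)%N.
Proof.
move=> P0.
apply: (big_ind (fun m => P m)) => //.
  by move=> x y Px Py; rewrite /maxn; case: ltnP.
by move=> i /asboolP.
Qed.

Lemma max_ge n (P : nat -> Prop) k : P k -> (k <= n)%N ->
  (k <= \max_(i < n.+1 | `[< P i >]) i)%N.
Proof.
move=> Pk kn.
have kn' : (k < n.+1)%N by [].
apply: (@leq_bigmax_cond _ (fun i : 'I_n.+1 => `[< P i >]) (fun i : 'I_n.+1 => nat_of_ord i) (Ordinal kn')).
by apply/asboolP.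
Qed.

Lemma sigma_fam F : disj_on_family src dst s t F (sigma src dst s t F).
Proof.
apply: max_attain.
by exists (fun i : 'I_0 => set0); split; case.
Qed.

Lemma sigma_ge F k : disj_on_family src dst s t F k -> (k <= #|E|)%N ->
  (k <= sigma src dst s t F)%N.
Proof. by move=> h kn; apply: max_ge. Qed.

Lemma gamma_fam S : disj_family_in src dst s t N S (gamma src dst s t N S).
Proof.
apply: max_attain.
by exists (fun i : 'I_0 => set0); split; case.
Qed.

Lemma gamma_ge S k : disj_family_in src dst s t N S k -> (k <= #|E|)%N ->
  (k <= gamma src dst s t N S)%N.
Proof. by move=> h kn; apply: max_ge. Qed.

Local Notation exf := (ex src dst).
Local Notation validf := (valid src dst s t N).
Local Notation reachf := (reach src dst s).
Local Notation tl := (tl src dst).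
Local Notation hd := (hd src dst).

Lemma flow_bound f (k : nat) : validf f -> exf f t = k%:Z -> (k <= #|N|)%N.
Proof.
move=> vf ek; have [g [gp gd]] := decomp st vf ek.
apply: (fam_card (C := N) (g := g)) => // i ik.
exact: A1 (gp i ik).1.
Qed.

Lemma flow_sigma f (k : nat) : validf f -> exf f t = k%:Z -> (k <= sigma src dst s t N)%N.
Proof.
move=> vf ek; have [g [gp gd]] := decomp st vf ek.
apply: sigma_ge.
  by apply: (nat_disj_on (g := g)) => // i ik; exact: (gp i ik).1.
apply: leq_trans (flow_bound vf ek) (max_card _).
Qed.

Lemma menger : exists C, is_cut_in src dst s t N C /\ (#|C| <= sigma src dst s t N)%N.
Proof.
pose Q := fun k : nat => `[< exists f, validf f /\ exf f t = k%:Z >].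
have Q0 : exists k, Q k.
  exists 0%N; apply/asboolP; exists (fun _ => 0); split.
    split => // v _ _; rewrite /ex !big1 ?subrr //.
  by rewrite /ex !big1 ?subrr.
have Qb : forall k, Q k -> (k <= #|N|)%N.
  by move=> k /asboolP [f [vf ef]]; apply: flow_bound vf ef.
case: (ex_maxnP Q0 Qb) => k /asboolP [f [vf ef]] kmax.
have [f0 f1 fc] := vf.
pose resid := fun a : E * bool =>
  if a.2 then (a.1 \notin N) || (f a.1 == 0) else 0 < f a.1.
case: (asboolP (reachf resid t)) => rt.
  exfalso.
  have [l [wl al el ul]] := reach_short rt.
  have uf := uniq_fst wl ul.
  pose g := fun e => f e + delta l e.
  have exg : forall v, exf g v = exf f v + ((t == v)%:Z - (s == v)%:Z).
    by move=> v; rewrite ex_add (ex_delta _ wl) el.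
  have vg : validf g.
    split.
    - move=> e; rewrite /g; case: (delta_cases e uf) => [->|[_ ->]|[m ->]].
      + by rewrite addr0.
      + by have := f0 e; lia.
      + by have := allP al _ m; rewrite /resid /= => h; lia.
    - move=> e eN; rewrite /g; case: (delta_cases e uf) => [->|[m ->]|[_ ->]].
      + by rewrite addr0; apply: f1.
      + have := allP al _ m; rewrite /resid /= eN /= => /eqP ->; lia.
      + by have := f1 e eN; lia.
    - move=> v vs vt; rewrite exg fc //.
      by rewrite eq_sym (negbTE vt) eq_sym (negbTE vs) /=; lia.
  have : Q k.+1.
    apply/asboolP; exists g; split => //.
    by rewrite exg ef eqxx (negbTE st) /=; lia.
  by move/kmax; rewrite ltnn.
pose X := [set v | `[< reachf resid v >]].
have sX : s \in X by rewrite Xin; apply/asboolP; apply: reach_s.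
have tX : t \notin X by rewrite Xin; apply/asboolP.
have inX : forall a, tl a \in X -> resid a -> hd a \in X.
  move=> a; rewrite !Xin => /asboolP ra ok; apply/asboolP.
  exact: reach_ext ra ok.
pose C := [set e | (e \in N) && (src e \in X) && (dst e \notin X)].
have outE : forall e, src e \in X -> dst e \notin X -> (e \in N) && (f e == 1).
  move=> e sx dx.
  have : ~~ resid (e, true) by apply: contra dx => /(inX (e, true) sx).
  rewrite /resid /= negb_or negbK => /andP[eN fe]; rewrite eN /=.
  by have := f0 e; have := f1 e eN; move: fe; lia.
exists C; split.
  split.
    by apply/subsetP => e; rewrite inE => /andP[/andP[]].
  move=> P [p [pp ->]].
  have := pp; rewrite is_path_seq_walk => /and3P[_ /eqP wt wp].
  have [a ain /andP[aX aX']] := walk_cross wp sX (ltac:(by rewrite wt)).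
  move: ain => /mapP [e ep ae]; subst a; move: aX aX'; rewrite /tl /hd /= => aX aX'.
  have /andP[eN _] := outE e aX aX'.
  apply/set0Pn; exists e; rewrite in_setI; apply/andP; split; first by rewrite inE.
  by rewrite /C in_set eN aX aX'.
have H := ex_cut src dst f X.
have L : \sum_(v in X) exf f v = exf f s.
  rewrite (bigD1 s) //= big1 ?addr0 // => v /andP[vX vs].
  apply: fc => //.
  by apply: contraNneq tX => <-.
have in0 : \sum_(e | (dst e \in X) && (src e \notin X)) f e = 0.
  apply: big1 => e /andP[dx sx].
  apply/eqP; rewrite eq_le f0 andbT leNgt; apply/negP => fe.
  by move: sx; rewrite (inX (e, false)).
have outC : \sum_(e | (src e \in X) && (dst e \notin X)) f e = #|C|%:Z.
  rewrite (eq_bigr (fun _ => 1)); last first.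
    by move=> e /andP[sx dx]; have /andP[_ /eqP] := outE e sx dx.
  rewrite (eq_bigl (fun e => e \in C)); last first.
    move=> e /=; rewrite [e \in C]in_set.
    case: (boolP (src e \in X)) => sx;
      case: (boolP (dst e \in X)) => dx; rewrite /= ?andbF ?andbT //=.
    by have /andP[] := outE e sx dx.
  by rewrite sumr_const; change (#|C|%:R = #|C|%:Z); rewrite natz.
move: H; rewrite L (ex_s vf st) ef in0 outC sub0r => /eqP; rewrite eqr_opp => /eqP Ck.
have -> : #|C| = k by case: Ck.
exact: flow_sigma vf ef.
Qed.

End Menger.
Section Real.
Local Open Scope ring_scope.
Variables (R : realType) (V E : finType) (src dst : E -> V) (s t : V) (N : {set E}).
Hypothesis st : s != t.
Hypothesis A1 : forall P, is_path src dst s t P -> P :&: N != set0.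

Local Notation sN := (sigma src dst s t N).
Local Notation tl := (tl src dst).
Local Notation hd := (hd src dst).
Local Notation walk := (walk src dst).
Local Notation wend := (wend src dst).

Definition w (y : player N -> R) (e : E) : R :=
  if @insub _ (fun e => e \in N) (player N) e is Some i then y i else 0.

Lemma w_val (y : player N -> R) (i : player N) : w y (val i) = y i.
Proof. by rewrite /w valK. Qed.

Lemma w_out (y : player N -> R) e : e \notin N -> w y e = 0.
Proof. by move=> eN; rewrite /w insubF //; apply/negbTE. Qed.

Lemma w_ge0 (y : player N -> R) e : (forall i, 0 <= y i) -> 0 <= w y e.
Proof. by move=> y0; rewrite /w; case: insub. Qed.

Lemma sum_player (F : E -> R) (S : {set E}) :
  \sum_(i : player N | val i \in S) F (val i) = \sum_(e in S) (if e \in N then F e else 0).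
Proof.
rewrite -big_sub_cond [RHS]big_mkcond [LHS]big_mkcond; apply: eq_bigr => e _.
case: ifP => [/andP[eN eS]|h].
  have eS' : e \in S by exact: eS.
  by rewrite eS' eN.
case: (boolP (e \in S)) => eS' //; case: (boolP (e \in N)) => eN //.
by exfalso; move: h; rewrite eN /= => /negbT/negP; apply; exact: eS'.
Qed.

Lemma xsum_w (y : player N -> R) S : xsum y S = \sum_(e in S) w y e.
Proof.
rewrite /xsum (eq_bigr (fun i => w y (val i))); last by move=> i _; rewrite w_val.
rewrite sum_player; apply: eq_bigr => e _.
by case: (boolP (e \in N)) => eN //=; rewrite w_out.
Qed.

Lemma xsum_all (y : player N -> R) : xsum y N = \sum_i y i.
Proof. by rewrite /xsum; apply: eq_bigl => i; rewrite (valP i). Qed.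

Lemma sum_player_card (C : {set E}) : C \subset N ->
  \sum_(i : player N) ((val i \in C)%:R : R) = #|C|%:R.
Proof.
move=> CN.
rewrite (eq_bigr (fun i => if val i \in C then 1 else 0)); last by move=> i _; case: (val i \in C).
rewrite -big_mkcond /= (sum_player (fun _ => 1)).
rewrite (eq_bigr (fun _ => 1)); first by rewrite sumr_const.
by move=> e eC; rewrite (subsetP CN _ eC).
Qed.

Lemma xsum_fam (x : player N -> R) (S : {set E}) k (g : nat -> {set E}) :
  (forall i, 0 <= x i) ->
  (forall i, (i < k)%N -> g i :&: N \subset S) ->
  (forall i j, (i < k)%N -> (j < k)%N -> i != j -> g i :&: g j :&: N = set0) ->
  \sum_(i < k) xsum x (g i) <= xsum x S.
Proof.
move=> x0 gS gd.
rewrite /xsum (eq_bigr (fun i : 'I_k => \sum_(j : player N) ((val j \in g i)%:R * x j)));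
  last by move=> i _; rewrite big_mkcond; apply: eq_bigr => j _; case: (val j \in g i); rewrite ?mul1r ?mul0r.
rewrite exchange_big /= [X in _ <= X]big_mkcond /=; apply: ler_sum => j _.
rewrite -mulr_suml.
case: (boolP [exists i : 'I_k, val j \in g i]) => [/existsP [i0 ji0]|none].
  have jS : val j \in S by apply: (subsetP (gS i0 (ltn_ord i0))); rewrite inE ji0 (valP j).
  rewrite jS (bigD1 i0) //= ji0 big1 ?addr0 ?mul1r //.
  move=> i ni; case: (boolP (val j \in g i)) => // ji.
  have := gd i i0 (ltn_ord i) (ltn_ord i0) ni.
  by move/setP/(_ (val j)); rewrite !inE ji ji0 (valP j).
rewrite big1 ?mul0r; first by case: (val j \in S).
move=> i _; case: (boolP (val j \in g i)) => // ji.
by move: none; rewrite negb_exists => /forallP /(_ i); rewrite ji.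
Qed.

End Real.
Section Layer.
Local Open Scope ring_scope.
Variables (R : realType) (V E : finType) (src dst : E -> V) (s t : V) (N : {set E}).
Hypothesis st : s != t.
Hypothesis A1 : forall P, is_path src dst s t P -> P :&: N != set0.

Local Notation sN := (sigma src dst s t N).

Lemma cut_lb C : is_cut_in src dst s t N C -> (sN <= #|C|)%N.
Proof.
move=> [CN cP].
have [g [gp gd]] := disj_on_nat (sigma_fam src dst s t N).
apply: (@fam_card _ N C _ g) => // i ik; apply: cP; exact: gp.
Qed.

Lemma min_cut_card C : is_min_cut_in src dst s t N C -> #|C| = sN.
Proof.
move=> [cC mC]; apply/eqP; rewrite eqn_leq cut_lb // andbT.
have [C' [cC' le']] := menger st A1.
exact: leq_trans (mC _ cC') le'.
Qed.

Lemma sum_ind_card (C : {set E}) : C \subset N ->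
  \sum_(i : player N | val i \in C) (1 : R) = #|C|%:R.
Proof.
move=> CN; rewrite -(sum_player_card R CN) big_mkcond /=.
by apply: eq_bigr => i _; case: (val i \in C).
Qed.

Definition Ccut (d : V -> R) := [set e | (e \in N) && (d (src e) <= 0) && (0 < d (dst e))].

Lemma Ccut_cut (y : player N -> R) d : d s <= 0 -> 1 <= d t ->
  (forall e, d (dst e) <= d (src e) + w y e) -> is_cut_in src dst s t N (Ccut d).
Proof.
move=> ds dt tri; split.
  by apply/subsetP => e; rewrite inE => /andP[/andP[]].
move=> P [p [pp ->]].
have := pp; rewrite is_path_seq_walk => /and3P[_ /eqP wt wp].
have [a ain /andP[aX aX']] := walk_cross (X := [pred v | d v <= 0]) wp
  (ltac:(by rewrite inE)) (ltac:(rewrite wt inE -ltNge; lra)).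
move: ain => /mapP [e ep ae]; subst a.
move: aX aX'; rewrite /tl /hd /= !inE -ltNge => aX aX'.
have eN : e \in N.
  apply: contraT => eN; have := tri e; rewrite w_out //; lra.
apply/set0Pn; exists e; rewrite in_setI; apply/andP; split; first by rewrite inE.
by rewrite /Ccut inE eN aX aX'.
Qed.

Lemma sum_delta (F : {set E} -> R) C : \sum_C' (C' == C)%:R * F C' = F C.
Proof.
rewrite (bigD1 C) //= eqxx mul1r big1 ?addr0 //.
by move=> C' /negbTE ->; rewrite mul0r.
Qed.

Lemma layer_base (y : player N -> R) (d : V -> R) :
  (forall v, ~~ ((0 < d v) && (d v < 1))) ->
  (forall i, 0 <= y i) -> d s <= 0 -> 1 <= d t ->
  (forall e, d (dst e) <= d (src e) + w y e) ->
  xsum y N <= sN%:R ->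
  xsum y N = sN%:R /\ in_hull_min_cuts src dst s t y.
Proof.
move=> nod y0 ds dt tri yN.
have cC := Ccut_cut ds dt tri.
set C := Ccut d in cC *.
have lbC := cut_lb cC.
have CN : C \subset N by case: cC.
have wC : forall i, val i \in C -> 1 <= y i.
  move=> i; rewrite inE => /andP[/andP[_ h1] h2].
  have := tri (val i); rewrite w_val => h3.
  have := nod (dst (val i)); rewrite h2 /= -leNgt => h4; lra.
move: yN; rewrite xsum_all (bigID (fun i => val i \in C)) /=.
set A := \sum_(i | val i \in C) y i.
set B := \sum_(i | val i \notin C) y i.
have AC : #|C|%:R <= A.
  by rewrite -(sum_ind_card CN); apply: ler_sum => i iC; apply: wC.
have B0 : 0 <= B by apply: sumr_ge0 => i _.
have lbC' : sN%:R <= #|C|%:R :> R by rewrite ler_nat.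
move=> yN.
have eA : A = #|C|%:R by lra.
have eB : B = 0 by lra.
have eC : #|C| = sN by apply/eqP; rewrite -(eqr_nat R); apply/eqP; lra.
have y1 : forall i, val i \in C -> y i = 1.
  move=> i iC; apply/eqP; rewrite -subr_eq0; apply/eqP.
  move: i iC; apply: psumr_eq0P => [i iC|]; first by have := wC i iC; lra.
  by rewrite sumrB -/A eA -(sum_ind_card CN) subrr.
have y0' : forall i, val i \notin C -> y i = 0.
  by apply: psumr_eq0P.
have minC : is_min_cut_in src dst s t N C.
  by split => // C' cC'; rewrite eC; apply: cut_lb.
split; first by lra.
exists (fun C' => (C' == C)%:R); split; [| split; [| split]].
- by move=> C'; case: (_ == _).
- by move=> C' nC'; case: eqP => // eq; subst C'.
- by rewrite (eq_bigr (fun C' => (C' == C)%:R * 1)) ?sum_delta // => C' _; rewrite mulr1.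
- move=> i; rewrite sum_delta.
  by case: (boolP (val i \in C)) => iC; [rewrite y1 | rewrite y0'].
Qed.

Lemma layer n : forall (y : player N -> R) (d : V -> R),
  (#|[set v | ((0 < d v) && (d v < 1))%R]| <= n)%N ->
  (forall i, 0 <= y i) -> d s <= 0 -> 1 <= d t ->
  (forall e, d (dst e) <= d (src e) + w y e) ->
  xsum y N <= sN%:R ->
  xsum y N = sN%:R /\ in_hull_min_cuts src dst s t y.
Proof.
elim: n => [|n IH] y d cd y0 ds dt tri yN.
  apply: (layer_base (d := d)) => // v; apply/negP => hv.
  by move: cd; rewrite leqn0 => /eqP/cards0_eq/setP/(_ v); rewrite !inE hv.
case: (boolP [exists v, (0 < d v) && (d v < 1)]) => [/existsP [v1 Pv1]|none]; last first.
  apply: (layer_base (d := d)) => // v; apply/negP => hv.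
  by move: none; rewrite negb_exists => /forallP/(_ v); rewrite hv.
pose v0 := [arg min_(v < v1 | (0 < d v) && (d v < 1)) d v]%O.
have [Pv0 minv0] : ((0 < d v0) && (d v0 < 1)) /\
    (forall v, (0 < d v) && (d v < 1) -> d v0 <= d v).
  by rewrite /v0; case: arg_minP => // v Pv hv; split.
set th := d v0.
have th0 : 0 < th by case/andP: Pv0.
have th1 : th < 1 by case/andP: Pv0.
have nz : 1 - th != 0 by rewrite subr_eq0 eq_sym lt_eqF.
have key : forall v, 0 < d v -> th <= d v.
  move=> v dv; case: (ltrP (d v) 1) => h; first by apply: minv0; rewrite dv h.
  lra.
have cC := Ccut_cut ds dt tri.
set C := Ccut d in cC *.
have CN : C \subset N by case: cC.
have lbC := cut_lb cC.
have lbC' : sN%:R <= #|C|%:R :> R by rewrite ler_nat.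
have wnn : forall e, 0 <= w y e by move=> e; apply: w_ge0.
have wC : forall e, e \in C -> th <= w y e.
  move=> e; rewrite inE => /andP[/andP[_ h1] h2].
  have := tri e; have := key _ h2; lra.
pose y' := fun i : player N => (y i - th * (val i \in C)%:R) / (1 - th).
pose d' := fun v => (if d v <= th then 0 else d v - th) / (1 - th).
have wy' : forall e, w y' e = (w y e - th * (e \in C)%:R) / (1 - th).
  move=> e; case: (boolP (e \in N)) => eN.
    by rewrite /w insubT /=.
  have eC : (e \in C) = false by apply: contraNF eN; apply: (subsetP CN).
  by rewrite !w_out // eC mulr0 subrr mul0r.
have sub : [set v | (0 < d' v) && (d' v < 1)] \proper [set v | (0 < d v) && (d v < 1)].
  apply/properP; split.
    apply/subsetP => v; rewrite !inE /d'.
    case: (lerP (d v) th) => hv; first by rewrite mul0r ltxx.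
    move=> /andP[_ h2]; move: h2; rewrite ltr_pdivrMr ?subr_gt0 // mul1r => h2.
    apply/andP; split; lra.
  exists v0; rewrite !inE ?Pv0 //.
  by rewrite /d' lexx mul0r ltxx.
have cd' : (#|[set v | ((0 < d' v) && (d' v < 1))%R]| <= n)%N.
  by have h := proper_card sub; rewrite -ltnS; exact: leq_trans h cd.
have xs' : xsum y' N = (xsum y N - th * #|C|%:R) / (1 - th).
  by rewrite !xsum_all /y' -mulr_suml sumrB -mulr_sumr (sum_player_card R CN).
have y'0 : forall i, 0 <= y' i.
  move=> i; rewrite /y'; apply: divr_ge0; last by lra.
  case: (boolP (val i \in C)) => iC /=.
    by have := wC _ iC; rewrite w_val; lra.
  by rewrite mulr0 subr0.
have d's : d' s <= 0.
  by rewrite /d'; case: (lerP (d s) th) => h; [rewrite mul0r | lra].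
have d't : 1 <= d' t.
  rewrite /d'; case: (lerP (d t) th) => h; first by lra.
  by rewrite ler_pdivlMr ?subr_gt0 // mul1r; lra.
have tri' : forall e, d' (dst e) <= d' (src e) + w y' e.
  move=> e; rewrite wy' /d' -mulrDl; apply: ler_wpM2r; first by rewrite invr_ge0; lra.
  have := tri e; have := wnn e.
  case: (boolP (e \in C)) => eC /=.
    have := wC e eC; move: eC; rewrite inE => /andP[/andP[_ h1] h2].
    by case: (lerP (d (dst e)) th) => ?; case: (lerP (d (src e)) th) => ?; lra.
  by rewrite mulr0 subr0; case: (lerP (d (dst e)) th) => ?; case: (lerP (d (src e)) th) => ?; lra.
have yN' : xsum y' N <= sN%:R.
  rewrite xs' ler_pdivrMr ?subr_gt0 //; nra.
have [xs'' [lam' [l0 [lnm [lsum ly]]]]] := IH y' d' cd' y'0 d's d't tri' yN'.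
have h : xsum y N - th * #|C|%:R = sN%:R * (1 - th).
  by rewrite -xs'' xs' divfK.
have CsN : #|C|%:R <= sN%:R :> R by nra.
have eC : #|C| = sN by apply/eqP; rewrite eqn_leq lbC andbT -(ler_nat R).
have minC : is_min_cut_in src dst s t N C.
  by split => // C' cC'; rewrite eC; apply: cut_lb.
split; first by move: h; rewrite eC; lra.
exists (fun C' => th * (C' == C)%:R + (1 - th) * lam' C'); split; [| split; [| split]].
- move=> C'; apply: addr_ge0; apply: mulr_ge0 => //; try lra.
- move=> C' nC'; rewrite lnm // mulr0 addr0.
  by case: eqP => [eq|]; [subst C' | rewrite mulr0].
- rewrite big_split /= -!mulr_sumr lsum.
  rewrite (eq_bigr (fun C' => (C' == C)%:R * 1)) ?sum_delta; last by move=> C' _; rewrite mulr1.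
  ring.
- move=> i.
  rewrite (eq_bigr (fun C' => th * ((C' == C)%:R * (val i \in C')%:R) +
                               (1 - th) * (lam' C' * (val i \in C')%:R))); last first.
    by move=> C' _; ring.
  rewrite big_split /= -!mulr_sumr sum_delta -ly /y'.
  by field.
Qed.

End Layer.
Lemma sum_subseq_le (R : realType) (T : eqType) (F : T -> R) s1 s2 :
  subseq s1 s2 -> (forall x, 0 <= F x)%R ->
  (\sum_(x <- s1) F x <= \sum_(x <- s2) F x)%R.
Proof.
move=> /subseqP [m _ ->] F0 {s1}.
elim: s2 m => [|x s2 IH] [|b m] /=; rewrite ?big_nil //.
  by apply: sumr_ge0 => i _.
case: b; rewrite !big_cons.
  by rewrite lerD2l.
by apply: ler_wpDl => //; apply: IH.
Qed.

Section Pot.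
Local Open Scope ring_scope.
Variables (R : realType) (V E : finType) (src dst : E -> V) (s t : V) (N : {set E}).
Hypothesis st : s != t.
Hypothesis A1 : forall P, is_path src dst s t P -> P :&: N != set0.

Local Notation sN := (sigma src dst s t N).
Local Notation tl := (tl src dst).
Local Notation hd := (hd src dst).
Local Notation walk := (walk src dst).
Local Notation wend := (wend src dst).

Definition Pol (y : player N -> R) := [/\ forall i, 0 <= y i, xsum y N = sN%:R &
  forall P, is_path src dst s t P -> 1 <= xsum y P].

Definition walklen (y : player N -> R) (l : seq (E * bool)) := \sum_(a <- l) w y a.1.

Lemma walklen_ge0 y l : (forall i, 0 <= y i) -> 0 <= walklen y l.
Proof. by move=> y0; apply: sumr_ge0 => a _; apply: w_ge0. Qed.

Lemma walk_ge1 y : Pol y -> forall l, walk s l -> all snd l -> wend s l = t ->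
  1 <= walklen y l.
Proof.
move=> [y0 _ yP] l wl al el.
have [l' [w' e' u' s']] := shorten_walk wl.
have al' : all snd l' by apply/allP => a /(mem_subseq s') /(allP al).
have le : walklen y l' <= walklen y l.
  by apply: sum_subseq_le => // a; apply: w_ge0.
apply: le_trans le.
set p := map fst l'.
have fp : fwd p = l' by rewrite fwd_fst.
have pp : is_path_seq src dst s t p by rewrite is_path_seq_walk fp u' w' e' el eqxx.
have := yP [set e in p] (ex_intro _ p (conj pp erefl)).
rewrite xsum_w /walklen -fp /fwd big_map /=.
rewrite (big_uniq _ (path_uniq pp)).
by rewrite (eq_bigl (fun e => e \in p)) // => e; rewrite inE.
Qed.

Definition potset (y : player N -> R) v : classical_sets.set R :=
  fun r => r = 1 \/ exists l, [/\ walk s l, all snd l, wend s l = v & r = walklen y l].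

Definition pot y v := inf (potset y v).

Lemma pot_hlb y v : (forall i, 0 <= y i) -> classical_sets.has_lbound (potset y v).
Proof.
move=> y0; exists 0 => r [->|[l [_ _ _ ->]]]; first by lra.
exact: walklen_ge0.
Qed.

Lemma pot_le y v r : (forall i, 0 <= y i) -> potset y v r -> pot y v <= r.
Proof. by move=> y0 h; apply: (ge_inf (pot_hlb v y0)). Qed.

Lemma pot_ge y v x : x <= 1 ->
  (forall l, walk s l -> all snd l -> wend s l = v -> x <= walklen y l) -> x <= pot y v.
Proof.
move=> x1 h; apply: lb_le_inf; first by exists 1; left.
by move=> r [->|[l [wl al el ->]]] //; apply: h.
Qed.

Lemma pot_props y : Pol y ->
  [/\ pot y s <= 0, 1 <= pot y t & forall e, pot y (dst e) <= pot y (src e) + w y e].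
Proof.
move=> Py; have [y0 _ _] := Py.
split.
- by apply: pot_le => //; right; exists [::]; split => //; rewrite /walklen big_nil.
- by apply: pot_ge => // l wl al el; apply: walk_ge1.
- move=> e; rewrite -lerBlDr; apply: pot_ge.
    have := w_ge0 e y0; have : pot y (dst e) <= 1 by apply: pot_le => //; left.
    lra.
  move=> l wl al el; rewrite lerBlDr.
  apply: pot_le => //; right; exists (l ++ [:: (e, true)]); split.
  + by rewrite walk_cat wl el /= /tl /= eqxx.
  + by rewrite all_cat al.
  + by rewrite wend_cat.
  + by rewrite /walklen big_cat big_seq1.
Qed.

Lemma pol_hull y : Pol y -> in_hull_min_cuts src dst s t y.
Proof.
move=> Py; have [y0 yN _] := Py; have [ds dt tri] := pot_props Py.
have := @layer R V E src dst s t N #|V| y (pot y) (max_card _) y0 ds dt tri.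
by rewrite yN lexx => /(_ isT) [].
Qed.

Lemma hull_pol y : in_hull_min_cuts src dst s t y -> Pol y.
Proof.
move=> [lam [l0 [lnm [lsum ly]]]].
have y0 : forall i, 0 <= y i.
  by move=> i; rewrite ly; apply: sumr_ge0 => C _; apply: mulr_ge0.
split => //.
  rewrite xsum_all (eq_bigr _ (fun i _ => ly i)) exchange_big /=.
  rewrite (eq_bigr (fun C => lam C * sN%:R)); first by rewrite -mulr_suml lsum mul1r.
  move=> C _; rewrite -mulr_sumr.
  case: (asboolP (is_min_cut_in src dst s t N C)) => mC.
    have CN : C \subset N by case: mC => -[].
    by rewrite (sum_player_card R CN) (min_cut_card st A1 mC).
  by rewrite lnm // !mul0r.
move=> P Pp; rewrite /xsum (eq_bigr _ (fun i _ => ly i)) exchange_big /=.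
apply: (@le_trans _ _ (\sum_C lam C)); first by rewrite lsum.
apply: ler_sum => C _; rewrite -mulr_sumr.
case: (asboolP (is_min_cut_in src dst s t N C)) => mC; last by rewrite lnm // !mul0r.
have [[CN cP] _] := mC.
have /set0Pn [e] := cP P Pp; rewrite in_setI => /andP[eP eC].
have eN : e \in N by apply: (subsetP CN).
rewrite -{1}[lam C]mulr1; apply: ler_wpM2l => //.
rewrite (bigD1 (Sub e eN : player N)) /=; last by [].
rewrite eC ler_wpDr //; first by apply: sumr_ge0 => i _; apply: ler0n.
Qed.

End Pot.
Section Core.
Local Open Scope ring_scope.
Variables (R : realType) (V E : finType) (src dst : E -> V) (s t : V) (N : {set E}).
Hypothesis st : s != t.
Hypothesis A1 : forall P, is_path src dst s t P -> P :&: N != set0.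
Hypothesis Hex : exists P, is_path src dst s t P.

Local Notation sN := (sigma src dst s t N).
Local Notation sE := (sigma src dst s t [set: E]).
Local Notation epsS := ((sE%:R : R) / sN%:R - 1).

Lemma gammaN : gamma src dst s t N N = sE.
Proof.
rewrite /gamma /sigma; apply: eq_bigl => k.
apply/asboolP/asboolP => -[f [fp fd]]; exists f; split.
- by move=> i; exact: (fp i).1.
- by move=> i j ij; rewrite setIT fd.
- by move=> i; split => //; apply/subsetP => e _; rewrite in_setU in_setC orbN.
- by move=> i j ij; rewrite -(setIT (f i :&: f j)) fd.
Qed.

Lemma E_pos : (0 < #|E|)%N.
Proof.
have [P Pp] := Hex; have /set0Pn [e _] := A1 Pp.
by apply/card_gt0P; exists e.
Qed.

Lemma one_fam F : disj_on_family src dst s t F 1.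
Proof.
have [P Pp] := Hex.
by exists (fun _ => P); split => // i j; rewrite !ord1.
Qed.

Lemma sN_ge1 : (1 <= sN)%N.
Proof. by apply: sigma_ge; [apply: one_fam | apply: E_pos]. Qed.

Lemma sE_ge1 : (1 <= sE)%N.
Proof. by apply: sigma_ge; [apply: one_fam | apply: E_pos]. Qed.

Lemma gamma_path_ge1 P : is_path src dst s t P -> (1 <= gamma src dst s t N (P :&: N))%N.
Proof.
move=> Pp; apply: gamma_ge; last exact: E_pos.
exists (fun _ => P); split => //; last by move=> i j; rewrite !ord1.
move=> i; split => //; apply/subsetP => e eP.
by rewrite in_setU in_setI in_setC eP /=; case: (e \in N).
Qed.

Lemma xsum_PN (x : player N -> R) P : xsum x (P :&: N) = xsum x P.
Proof. by apply: eq_bigl => i; rewrite in_setI (valP i) andbT. Qed.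

Lemma xsum_scale (x : player N -> R) c S : xsum (fun i => c * x i) S = c * xsum x S.
Proof. by rewrite /xsum mulr_sumr. Qed.

Lemma sN_pos : 0 < sN%:R :> R.
Proof. by rewrite ltr0n; apply: sN_ge1. Qed.

Lemma sE_pos : 0 < sE%:R :> R.
Proof. by rewrite ltr0n; apply: sE_ge1. Qed.

Lemma core_pol (x : player N -> R) : in_approx_core src dst s t epsS x ->
  Pol src dst s t (fun i => sN%:R / sE%:R * x i).
Proof.
move=> [x0 [xN xS]].
have a0 := sE_pos; have b0 := sN_pos.
split.
- by move=> i; apply: mulr_ge0 => //; apply: divr_ge0; apply: ltW.
- by rewrite xsum_scale xN gammaN; field; apply: lt0r_neq0.
- move=> P Pp.
  have h := xS (P :&: N) (subsetIr _ _); rewrite xsum_PN in h.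
  have g1 : 1 <= (gamma src dst s t N (P :&: N))%:R :> R.
    by rewrite ler1n; apply: gamma_path_ge1.
  have q0 : 0 <= sE%:R / sN%:R :> R by apply: divr_ge0; apply: ltW.
  have hq : sE%:R / sN%:R <= xsum x P.
    apply: le_trans h; rewrite (_ : 1 + _ = sE%:R / sN%:R); last by ring.
    by rewrite -{1}[_ / _]mulr1; apply: ler_wpM2l.
  rewrite xsum_scale.
  apply: (@le_trans _ _ (sN%:R / sE%:R * (sE%:R / sN%:R))).
    by rewrite le_eqVlt; apply/orP; left; apply/eqP; field; apply/andP; split; apply: lt0r_neq0.
  by apply: ler_wpM2l => //; apply: divr_ge0; apply: ltW.
Qed.

Lemma gamma_le_xsum (y : player N -> R) (S : {set E}) : Pol src dst s t y -> S \subset N ->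
  (gamma src dst s t N S)%:R <= xsum y S.
Proof.
move=> [y0 _ yP] SN.
have [g [gp gd]] := disj_in_nat (gamma_fam src dst s t N S).
have := @xsum_fam R E N y S _ g y0.
move=> /(_ _ _) H.
apply: (@le_trans _ _ (\sum_(i < gamma src dst s t N S) xsum y (g i))); last first.
  apply: H.
    move=> i ik; apply/subsetP => e; rewrite in_setI => /andP[eg eN].
    by have := subsetP (gp i ik).2 e eg; rewrite in_setU in_setC eN orbF.
  by move=> i j ik jk ij; rewrite gd // set0I.
have -> : (gamma src dst s t N S)%:R = \sum_(i < gamma src dst s t N S) (1 : R).
  by rewrite sumr_const card_ord.
by apply: ler_sum => i _; apply: yP; exact: (gp i (ltn_ord i)).1.
Qed.

Lemma pol_core (y : player N -> R) : Pol src dst s t y ->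
  in_approx_core src dst s t epsS (fun i => sE%:R / sN%:R * y i).
Proof.
move=> Py; have [y0 yN yP] := Py.
have a0 := sE_pos; have b0 := sN_pos.
have q0 : 0 <= sE%:R / sN%:R :> R by apply: divr_ge0; apply: ltW.
split; [|split].
- by move=> i; apply: mulr_ge0.
- by rewrite xsum_scale yN gammaN; field; apply: lt0r_neq0.
- move=> S SN; rewrite xsum_scale (_ : 1 + _ = sE%:R / sN%:R); last by ring.
  by apply: ler_wpM2l => //; apply: gamma_le_xsum.
Qed.

Lemma eps_bound (eps : R) (x : player N -> R) : in_approx_core src dst s t eps x -> eps <= epsS.
Proof.
move=> [x0 [xN xS]].
have a0 := sE_pos; have b0 := sN_pos.
have q0 : 0 <= sE%:R / sN%:R :> R by apply: divr_ge0; apply: ltW.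
case: (lerP (1 + eps) 0) => h; first by lra.
have [g [gp gd]] := disj_on_nat (sigma_fam src dst s t N).
have H := @xsum_fam R E N x N sN g x0 (fun i _ => subsetIr _ _) gd.
have L : forall i : 'I_sN, 1 + eps <= xsum x (g i).
  move=> i; have := xS (g i :&: N) (subsetIr _ _); rewrite xsum_PN.
  apply: le_trans; rewrite -{1}[1 + eps]mulr1; apply: ler_wpM2l; first by lra.
  by rewrite ler1n; apply: gamma_path_ge1; apply: gp.
have : (1 + eps) * sN%:R <= sE%:R.
  rewrite -gammaN -xN; apply: le_trans H.
  have -> : (1 + eps) * sN%:R = \sum_(i < sN) ((1 + eps) * 1).
    by rewrite sumr_const card_ord mulr1 mulr_natr.
  by apply: ler_sum => i _; rewrite mulr1; apply: L.
rewrite -ler_pdivlMr //; lra.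
Qed.

End Core.
Local Open Scope ring_scope.

Theorem theorem1 (R : realType) (V E : finType) (src dst : E -> V) (s t : V)
  (N : {set E}) :
  (* (A1) every s-t path contains an arc of N *)
  (forall P, is_path src dst s t P -> P :&: N != set0) ->
  (* (A2) every arc lies on some s-t path *)
  (forall e : E, exists P, is_path src dst s t P /\ e \in P) ->
  (* non-degeneracy: D has an s-t path *)
  (exists P, is_path src dst s t P) ->
  let sE := sigma src dst s t [set: E] in
  let sN := sigma src dst s t N in
  let eps_star : R := sE%:R / sN%:R - 1 in
  (* eps_star = max { eps : C_eps(Gamma_D) <> empty } *)
  ((exists x : player N -> R, in_approx_core src dst s t eps_star x) /\
   (forall (eps : R) (x : player N -> R), in_approx_core src dst s t eps x -> eps <= eps_star)) /\
  (* (i) *)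
  (forall y : player N -> R,
     (exists x : player N -> R, in_approx_core src dst s t eps_star x /\
                forall i, y i = sN%:R / sE%:R * x i) <->
     ((forall i, 0 <= y i) /\ xsum y N = sN%:R /\
      (forall P, is_path src dst s t P -> 1 <= xsum y P))) /\
  (* (ii) *)
  (forall y : player N -> R,
     (exists x : player N -> R, in_approx_core src dst s t eps_star x /\
                forall i, y i = sN%:R / sE%:R * x i) <->
     in_hull_min_cuts src dst s t y).
Proof.
move=> A1 _ Hex; cbv zeta.
have st : s != t.
  apply/negP => /eqP est.
  have : is_path src dst s t set0.
    exists [::]; split; first by rewrite /is_path_seq /= est !eqxx.
    by apply/setP => e; rewrite !inE.
  by move/A1; rewrite set0I eqxx.
have a0 := sE_pos R A1 Hex; have b0 := sN_pos R A1 Hex.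
have iffP : forall y : player N -> R,
    (exists x : player N -> R, in_approx_core src dst s t
        ((sigma src dst s t [set: E])%:R / (sigma src dst s t N)%:R - 1) x /\
        forall i, y i = (sigma src dst s t N)%:R / (sigma src dst s t [set: E])%:R * x i)
    <-> Pol src dst s t y.
  move=> y; split.
    move=> [x [cx hy]].
    have -> : y = (fun i => (sigma src dst s t N)%:R / (sigma src dst s t [set: E])%:R * x i).
      by apply: funext.
    by have h := core_pol A1 Hex cx; exact: h.
  move=> Py; exists (fun i => (sigma src dst s t [set: E])%:R / (sigma src dst s t N)%:R * y i).
  split; first by have h := pol_core A1 Hex Py; exact: h.
  by move=> i; field; apply/andP; split; apply: lt0r_neq0.
have [C [cC Cle]] := menger st A1.
have minC : is_min_cut_in src dst s t N C.
  by split => // C' cC'; apply: leq_trans Cle (cut_lb cC').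
pose y0 := fun i : player N => ((val i \in C)%:R : R).
have hy0 : in_hull_min_cuts src dst s t y0.
  exists (fun C' => (C' == C)%:R); split; [| split; [| split]].
  - by move=> C'; case: (_ == _).
  - by move=> C' nC'; case: eqP => // eq; subst C'.
  - by rewrite (eq_bigr (fun C' => (C' == C)%:R * 1)) ?sum_delta // => C' _; rewrite mulr1.
  - by move=> i; rewrite sum_delta.
split; [split|split].
- exists (fun i => (sigma src dst s t [set: E])%:R / (sigma src dst s t N)%:R * y0 i).
  by have h := pol_core A1 Hex (hull_pol st A1 hy0); exact: h.
- by move=> eps x cx; have h := eps_bound A1 Hex cx; exact: h.
- move=> y; rewrite iffP; split; first by case.
  by move=> [h1 [h2 h3]]; split.
- move=> y; rewrite iffP; split; first exact: pol_hull.
  by move=> h; have h' := hull_pol st A1 h; exact: h'.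
Qed.
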